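(* Let $\Psi=(\psi_k)_{k\in\mathbb N}$ with $\psi_k\in(-\pi/2,\pi/2)$, let $F_n=i\tan(\psi_{|n|})$ for $n\in\mathbb Z$, let $d\ge1$, and let $G_d(z)=\begin{pmatrix}a(z)&b(z)\\-b^*(z)&a^*(z)\end{pmatrix}$ be the $SU(2)$ nonlinear Fourier series of the sequence $(F_n\mathbf 1_{\{-d\le n\le d\}})_{n\in\mathbb Z}$. For $x\in[0,1]$ let $\theta\in[0,\pi/2]$ be the unique number with $\cos\theta=x$ and set $z=e^{2i\theta}$. Then $$i\,\operatorname{Im}(u_d(\Psi,x))=b(z).$$
   Context: For a function $a$ on a subset of the Riemann sphere, $a^*(z)=\overline{a(\overline{z}^{-1})}$. $W(x)=\begin{pmatrix}x& i\sqrt{1-x^2}\\ i\sqrt{1-x^2}& x\end{pmatrix}$, $Z=\begin{pmatrix}1&0\\0&-1\end{pmatrix}$; $U_0(\Psi,x)=e^{i\psi_0Z}$, $U_d(\Psi,x)=e^{i\psi_dZ}W(x)U_{d-1}(\Psi,x)W(x)e^{i\psi_dZ}$ for $d\ge1$; $u_d(\Psi,x)$ is the upper left entry of $U_d(\Psi,x)$. For a finitely supported sequence $F:\mathbb Z\to\mathbb C$ its $SU(2)$ nonlinear Fourier series is $G(z)=\prod_k(1+|F_k|^2)^{-1/2}\begin{pmatrix}1&F_kz^k\\-\overline{F_k}z^{-k}&1\end{pmatrix}$, product ordered with $k$ increasing from left to right; it has the form $\begin{pmatrix}a&b\\-b^*&a^*\end{pmatrix}$. *)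

(* Defs.v *)
From mathcomp Require Import all_boot all_order all_algebra.
From mathcomp Require Import complex.
From mathcomp Require Import all_classical all_reals all_analysis.
Set Implicit Arguments. Unset Strict Implicit. Unset Printing Implicit Defensive.
Import Order.TTheory GRing.Theory Num.Theory.
Local Open Scope ring_scope.
Local Open Scope complex_scope.

Section QSP.
Variable R : realType.
Local Notation C := R[i].

Definition expiC (t : R) : C := cos t +i* sin t.

Definition expZ (psi : R) : 'M[C]_2 :=
  \matrix_(i < 2, j < 2)
    if i == j then (if i == 0 then expiC psi else expiC (- psi)) else 0.

Definition Wmat (x : R) : 'M[C]_2 :=
  \matrix_(i < 2, j < 2)
    if i == j then x%:C else 'i * (Num.sqrt (1 - x ^+ 2))%:C.

Fixpoint Umat (psi : nat -> R) (d : nat) (x : R) : 'M[C]_2 :=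
  match d with
  | 0 => expZ (psi 0%N)
  | d'.+1 => expZ (psi d) *m Wmat x *m Umat psi d' x *m Wmat x *m expZ (psi d)
  end.

Definition u_qsp (psi : nat -> R) (d : nat) (x : R) : C := Umat psi d x 0 0.

Definition nrm2 (c : C) : R := complex.Re c ^+ 2 + complex.Im c ^+ 2.

Definition nlf_factor (F : int -> C) (k : int) (z : C) : 'M[C]_2 :=
  ((Num.sqrt (1 + nrm2 (F k)))^-1)%:C *:
  \matrix_(i < 2, j < 2)
    if i == j then 1
    else if i == 0 then F k * z ^ k else - (F k)^* * z ^ (- k).

(* SU(2) nonlinear Fourier series of a sequence F supported in
   {lo, ..., lo + n - 1}: the ordered product of the factors with k
   increasing from left to right (factors outside the support are 1). *)
Definition nlfs (F : int -> C) (lo : int) (n : nat) (z : C) : 'M[C]_2 :=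
  \prod_(j < n) nlf_factor F (lo + j%:Z) z.

End QSP.

(* Main.v *)
Require Import Defs.
From mathcomp Require Import all_boot all_order all_algebra.
From mathcomp Require Import complex.
From mathcomp Require Import all_classical all_reals all_analysis.
From mathcomp Require Import ring lra zify.
Import Order.TTheory GRing.Theory Num.Theory.
Local Open Scope ring_scope.
Local Open Scope complex_scope.

Lemma i1 n j : - Posz n.+1 + Posz (1 + j)%N = - Posz n + Posz j.
Proof. rewrite (PoszD 1 j) -[n.+1]addn1 PoszD; ring. Qed.
Lemma i2 n : - Posz n.+1 + Posz (1 + (2 * n).+1)%N = Posz n.+1.
Proof. rewrite -[(2*n).+1]addn1 -[n.+1]addn1 !PoszD; ring. Qed.

Section Pf.
Variable R : realType.
Local Notation C := R[i].

Lemma mx2E (A B : 'M[C]_2) i j : (A *m B) i j = A i 0 * B 0 j + A i 1 * B 1 j.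
Proof. rewrite mxE !big_ord_recl big_ord0 addr0.
by have -> : (lift ord0 ord0 : 'I_2) = 1 by apply: val_inj. Qed.

Ltac m2 := apply/matrixP => -[[|[|//]] ?] [[|[|//]] ?]; rewrite ?mx2E !mxE /=.

Variable th : R.
Definition ww : C := expiC th.

Lemma ww_neq0 : ww != 0.
Proof.
apply/eqP => /eqP; rewrite /ww /expiC eq_complex /= => /andP[/eqP c /eqP s].
by have := cos2Dsin2 th; rewrite c s expr0n /= addr0 => /eqP; rewrite eq_sym oner_eq0.
Qed.

Definition Dk (k : int) : 'M[C]_2 :=
  \matrix_(i < 2, j < 2) if i == j then (if i == 0 then ww ^ k else ww ^ (- k)) else 0.
Definition Mm (p : R) : 'M[C]_2 :=
  \matrix_(i < 2, j < 2) if i == j then (cos p)%:C else 'i * (sin p)%:C.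
Definition fac (p : R) (k : int) : 'M[C]_2 :=
  \matrix_(i < 2, j < 2) if i == j then (cos p)%:C
    else if i == 0 then 'i * (sin p)%:C * (ww * ww) ^ k
    else 'i * (sin p)%:C * (ww * ww) ^ (- k).

Lemma facE p k : fac p k = Dk k *m Mm p *m Dk (- k).
Proof.
have h : ww ^ k != 0 by rewrite expfz_neq0 // ww_neq0.
m2; rewrite ?opprK -?invr_expz ?expfzMl; field => //.
Qed.


Definition Hm : 'M[C]_2 := \matrix_(i < 2, j < 2) if (i == 1) && (j == 1) then -1 else 1.
Definition Hi : 'M[C]_2 := \matrix_(i < 2, j < 2) if (i == 1) && (j == 1) then - 2^-1 else 2^-1.

Lemma two_neq0 : (2 : C) != 0.
Proof. by rewrite pnatr_eq0. Qed.

Lemma HiHm : Hi *m Hm = 1%:M.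
Proof. have := two_neq0 => h; m2; field => //. Qed.
Lemma HmHi : Hm *m Hi = 1%:M.
Proof. have := two_neq0 => h; m2; field => //. Qed.

Lemma expiCE (t : R) : expiC t = (cos t)%:C + 'i * (sin t)%:C.
Proof. by apply/eqP; rewrite eq_complex /=; apply/andP; split; apply/eqP; ring. Qed.

Lemma HEH (p : R) : Hm *m expZ p *m Hi = Mm p.
Proof. have := two_neq0 => h; m2; rewrite !expiCE cosN sinN; field => //. Qed.

Lemma HWH (x : R) : x = cos th -> Num.sqrt (1 - x ^+ 2) = sin th -> Hm *m Wmat x *m Hi = Dk 1.
Proof.
move=> hx hs; have := two_neq0 => h. 
have e1 : ww ^ 1 = ww by [].
have e2 : ww ^ (-1) = (cos th)%:C - 'i * (sin th)%:C.
  rewrite exprN1; apply: (mulfI ww_neq0); rewrite mulfV ?ww_neq0 // /ww expiCE.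
  have := cos2Dsin2 th; rewrite !expr2 => hc.
  apply/eqP; rewrite eq_complex /=; apply/andP; split; apply/eqP; nra.
m2; rewrite ?hs ?hx ?e1 ?e2 /ww ?expiCE; field => //.
Qed.

Lemma DkD a b : Dk a *m Dk b = Dk (a + b).
Proof.
m2; rewrite ?mulr0 ?mul0r ?addr0 ?add0r // -expfzDr ?ww_neq0 //; congr (_ ^ _); ring.
Qed.

Lemma Dk0 : Dk 0 = 1%:M.
Proof. by m2; rewrite ?oppr0 ?expr0z. Qed.


Definition facF (psi : nat -> R) (k : int) := fac (psi (absz k)) k.
Definition G (psi : nat -> R) (n : nat) : 'M[C]_2 :=
  \prod_(j < (2 * n).+1) facF psi (- (n%:Z) + j%:Z).

Lemma Gstep psi n : G psi n.+1 = facF psi (- (n.+1%:Z)) * G psi n * facF psi (n.+1%:Z).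
Proof.
rewrite /G. have -> : (2 * n.+1).+1 = ((2*n).+1).+2 by rewrite mulnS.
rewrite big_ord_recl big_ord_recr /=. rewrite addr0 -!mulrA; congr (_ * _).
congr (_ * _).
  by apply: eq_bigr => j _; congr (facF _ _); rewrite /bump /= i1.
by congr (facF _ _); rewrite /bump /= i2.
Qed.

Lemma DkDr a b X : Dk a * (Dk b * X) = Dk (a + b) * X.
Proof. by rewrite mulrA -mulmxE DkD. Qed.
Lemma DkDm a b : Dk a * Dk b = Dk (a + b).
Proof. by rewrite -mulmxE DkD. Qed.

Lemma main psi (x : R) n : x = cos th -> Num.sqrt (1 - x ^+ 2) = sin th ->
  Hm *m Umat psi n x *m Hi = Dk n *m G psi n *m Dk n.
Proof.
move=> hx hs.
elim: n => [|n IH].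
  rewrite /= HEH /G big_ord1 /facF /= facE.
  by rewrite ?oppr0 ?addr0 ?add0r ?oppr0 Dk0 !mul1mx !mulmx1.
rewrite [Umat _ n.+1 _]/= Gstep.
have hh : Hi * Hm = 1 by rewrite -mulmxE HiHm.
rewrite mulmxE in IH *.
have -> : forall E W U : 'M[C]_2, Hm * (E * W * U * W * E) * Hi =
   (Hm*E*Hi) * (Hm*W*Hi) * (Hm*U*Hi) * (Hm*W*Hi) * (Hm*E*Hi).
  by move=> E W U; rewrite -!mulrA !(mulrA Hi Hm) hh !mul1r.
rewrite -mulmxE HEH HWH // mulmxE IH /facF abszN /= !facE !opprK mulmxE.
rewrite -!mulrA !DkDr DkDm.
have -> : (Posz n.+1 + - Posz n.+1) = 0 by rewrite subrr.
have -> : (- Posz n.+1 + Posz n.+1) = 0 by rewrite addNr.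
have -> : (1 + Posz n) = Posz n.+1 by rewrite -[n.+1]addn1 PoszD addrC.
have -> : (Posz n + 1) = Posz n.+1 by rewrite -[n.+1]addn1 PoszD.
by rewrite Dk0 mulr1 -[1%:M]/(1 : 'M[C]_2) mul1r.
Qed.

Lemma expZT (p : R) : (expZ p)^T = expZ p.
Proof. by m2. Qed.
Lemma WmatT (x : R) : (Wmat x)^T = Wmat x.
Proof. by m2. Qed.

Lemma Usym psi (x : R) n : (Umat psi n x)^T = Umat psi n x.
Proof.
elim: n => [|n IH] /=; first exact: expZT.
by rewrite !trmx_mul expZT WmatT IH !mulmxA.
Qed.

Ltac ceq := apply/eqP; rewrite eq_complex /=; apply/andP; split; apply/eqP; ring.
Lemma cD (a b : C) : conjc (a + b) = conjc a + conjc b.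
Proof. by case: a => ? ?; case: b => ? ?; ceq. Qed.
Lemma cM (a b : C) : conjc (a * b) = conjc a * conjc b.
Proof. by case: a => ? ?; case: b => ? ?; ceq. Qed.
Lemma cN (a : C) : conjc (- a) = - conjc a.
Proof. by case: a => ? ?; ceq. Qed.
Lemma cK (a : C) : conjc (conjc a) = a.
Proof. by case: a => ? ?; ceq. Qed.

Definition qf (A : 'M[C]_2) := A 1 1 = conjc (A 0 0) /\ A 1 0 = - conjc (A 0 1).

Lemma qf_mul A B : qf A -> qf B -> qf (A *m B).
Proof.
move=> [a1 a2] [b1 b2]; rewrite /qf !mx2E a1 a2 b1 b2.
rewrite !cD !cM !cN !cK; split; ring.
Qed.

Lemma qf_expZ (p : R) : qf (expZ p).
Proof.
rewrite /qf !mxE /= /expiC cosN sinN; split => //.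
by ceq.
Qed.

Lemma qf_W (x : R) : qf (Wmat x).
Proof.
rewrite /qf !mxE /=; split; first by ceq.
by apply/eqP; rewrite eq_complex /=; apply/andP; split; apply/eqP; ring.
Qed.

Lemma qfU psi (x : R) n : qf (Umat psi n x).
Proof.
elim: n => [|n IH] /=; first exact: qf_expZ.
apply: qf_mul; last exact: qf_expZ. apply: qf_mul; last exact: qf_W. apply: qf_mul => //. by apply: qf_mul; [exact: qf_expZ|exact: qf_W].
Qed.

Lemma im_half (u : C) : (u - conjc u) / 2 = 'i * (complex.Im u)%:C.
Proof.
have h := two_neq0.
have -> : u - conjc u = 2 * ('i * (complex.Im u)%:C).
  by case: u => a b; apply/eqP; rewrite eq_complex /=; apply/andP; split; apply/eqP; ring.
by field.
Qed.

Lemma final psi (x : R) n : x = cos th -> Num.sqrt (1 - x ^+ 2) = sin th ->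
  'i * (complex.Im (u_qsp psi n x))%:C = G psi n 0 1.
Proof.
move=> hx hs.
move: (main psi x n hx hs) => /matrixP /(_ 0 1).
rewrite !mx2E !mxE /=.
have [q1 q2] := qfU psi x n.
have sy : Umat psi n x 1 0 = Umat psi n x 0 1.
  by rewrite -{1}Usym mxE.
rewrite sy q1 => e.
have hw : ww ^ n != 0 by rewrite expfz_neq0 // ww_neq0.
rewrite /u_qsp -im_half.
move: e; rewrite -invr_expz.
set a := Umat psi n x 0 0; set b := Umat psi n x 0 1; set g := G psi n 0 1.
rewrite mulr0 !mul0r add0r !addr0 mulrAC mulfV // !mul1r => <-.
have h2 := two_neq0; field => //.
Qed.

Lemma factorE (F : int -> C) (p : R) (k : int) : - (pi / 2) < p < pi / 2 ->
  F k = 'i * (tan p)%:C -> nlf_factor F k (ww * ww) = fac p k.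
Proof.
move=> hp hF.
have c0 : 0 < cos p := cos_gt0_pihalf hp.
have cn0 : cos p != 0 by rewrite gt_eqF.
have sc : Num.sqrt (1 + nrm2 ('i * (tan p)%:C)) = (cos p)^-1.
  have -> : 1 + nrm2 ('i * (tan p)%:C) = 1 + (sin p / cos p) ^+ 2.
    by rewrite /nrm2 /= /tan; ring.
  have -> : 1 + (sin p / cos p) ^+ 2 = (cos p ^+ 2 + sin p ^+ 2) / cos p ^+ 2.
    by field.
  rewrite cos2Dsin2 div1r -exprVn sqrtr_sqr ger0_norm //.
  by rewrite invr_ge0 ltW.
have hT : (cos p)%:C * (tan p)%:C = (sin p)%:C.
  by apply/eqP; rewrite eq_complex /=; apply/andP; split; apply/eqP; rewrite /tan; field.
have hC : - ('i * (tan p)%:C)^* = 'i * (tan p)%:C.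
  by apply/eqP; rewrite eq_complex /=; apply/andP; split; apply/eqP; ring.
rewrite /nlf_factor hF sc invrK.
m2; rewrite ?mulr1 //.
  by rewrite -hT; ring.
by rewrite hC -hT; ring.
Qed.

Lemma wwz : expiC (2 * th) = ww * ww.
Proof.
rewrite /ww /expiC (_ : 2 * th = th + th); last by ring.
by rewrite cosD sinD; ceq.
Qed.

End Pf.

Theorem lemma4p2 (R : realType) (psi : nat -> R)
  (hpsi : forall k : nat, - (pi / 2) < psi k < pi / 2)
  (d : nat) (hd : (1 <= d)%N)
  (x : R) (hx : 0 <= x <= 1)
  (theta : R) (htheta : 0 <= theta <= pi / 2) (hcos : cos theta = x) :
  let F : int -> R[i] :=
    fun n => if (absz n <= d)%N then 'i * (tan (psi (absz n)))%:C else 0 in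
  let z : R[i] := expiC (2 * theta) in
  'i * (complex.Im (u_qsp psi d x))%:C = nlfs F (- (d%:Z)) (2 * d).+1 z 0 1.
Proof.
move=> F z.
have hs : Num.sqrt (1 - x ^+ 2) = sin theta.
  rewrite -hcos -sin2cos2 sqrtr_sqr ger0_norm //; apply: sin_ge0_pi.
  case/andP: htheta => h1 h2; have := pi_gt0 R => hp.
  by apply/andP; split => //; lra.
rewrite (@final R theta psi x d (esym hcos) hs).
have -> : nlfs F (- (d%:Z)) (2 * d).+1 z = @G R theta psi d.
  rewrite /nlfs /G /z (@wwz R theta); apply: eq_bigr => j _.
  have hk : (absz (- Posz d + Posz j)%R <= d)%N.
    have := ltn_ord j; move: (nat_of_ord j) => jj hj; lia.
  rewrite /facF; apply: factorE => //.
  by rewrite /F hk.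
by [].
Qed.
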